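(* Let $A$ be a nonempty finite set of $n$ alternatives and $\succ^w,\succ^o$ priority orderings on $A$. Each of the Walk-Open, Open-Walk, Rotating and Compromise choice rules (for $(\succ^w,\succ^o)$) satisfies capacity-filling, gross substitutes, and monotonicity. The Rotating choice rule satisfies the irrelevance of accepted alternatives and is (capacity-constrained) lexicographic, whereas the Walk-Open, Open-Walk and Compromise choice rules do not in general satisfy the irrelevance of accepted alternatives and are not in general (capacity-constrained) lexicographic (for each of them there exist $A$, $\succ^w$, $\succ^o$ for which it violates these).
   Context: Let $\mathcal{A}$ be the nonempty subsets of $A$. A choice rule assigns to each $(S,q)\in\mathcal{A}\times\{1,\dots,n\}$ a nonempty $C(S,q)\subseteq S$, $|C(S,q)|\le q$; $R(S,q)=S\setminus C(S,q)$. Given a list $(\succ_1,\dots,\succ_k)$ of priority orderings (strict linear orders on $A$), the lexicographic choice from $S$ chooses the $\succ_1$-highest element of $S$, then the $\succ_2$-highest among the remaining, etc., until $k$ are chosen or none is left. $C$ is (capacity-constrained) lexicographic if there is a profile $(\succ_1,\dots,\succ_n)$ such that $C(S,q)$ is the lexicographic choice from $S$ with $(\succ_1,\dots,\succ_q)$ for all $(S,q)$. The four rules are defined by taking, at capacity $q$, $C(S,q)$ to be the lexicographic choice from $S$ with the following list of length $q$ (w denotes $\succ^w$, o denotes $\succ^o$): Walk-Open: first $\lceil q/2\rceil$ entries w, remaining entries o. Open-Walk: first $\lceil q/2\rceil$ entries o, remaining entries w. Rotating: w, o, w, o, … (odd positions w, even positions o). Compromise: writing $q=4m+k$ with $k\in\{0,1,2,3\}$,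 the list consists of a block of w's, then a block of o's, then a block of w's, of lengths $(m,2m,m)$ if $k=0$, $(m+1,2m,m)$ if $k=1$, $(m+1,2m+1,m)$ if $k=2$, $(m+1,2m+1,m+1)$ if $k=3$. Capacity-filling: $|C(S,q)|=\min\{|S|,q\}$. Gross substitutes: for $a\neq b$ in $S$, $a\in C(S,q)\Rightarrow a\in C(S\setminus\{b\},q)$. Monotonicity: $C(S,q)\subseteq C(S,q+1)$ for $q\le n-1$. Irrelevance of accepted alternatives: for $S,S'\in\mathcal{A}$ and $q\le n-1$, $R(S,q)=R(S',q)$ implies $C(S,q+1)\cap R(S,q)=C(S',q+1)\cap R(S',q)$. *)

(* Defs.v *)
From mathcomp Require Import all_boot.
Set Implicit Arguments. Unset Strict Implicit. Unset Printing Implicit Defensive.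

Section ChoiceRules.
Variable A : finType.

(* A priority ordering: a strict linear order; [r x y] reads "x ≻ y". *)
Definition strict_linear (r : rel A) : Prop :=
  irreflexive r /\ transitive r /\ (forall x y, x != y -> r x y || r y x).

Definition top (r : rel A) (S : {set A}) : option A :=
  [pick x in S | [forall y in S, (y != x) ==> r x y]].

Fixpoint lexchoice (l : seq (rel A)) (S : {set A}) : {set A} :=
  if l is r :: l' then
    if top r S is Some a then a |: lexchoice l' (S :\ a) else set0
  else set0.

Definition capacity_filling (n : nat) (C : {set A} -> nat -> {set A}) : Prop :=
  forall S q, S != set0 -> 0 < q <= n -> #|C S q| = minn #|S| q.

Definition gross_substitutes (n : nat) (C : {set A} -> nat -> {set A}) : Prop :=
  forall S q a b, S != set0 -> 0 < q <= n -> a \in S -> b \in S -> a != b ->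
    a \in C S q -> a \in C (S :\ b) q.

Definition monotonicity (n : nat) (C : {set A} -> nat -> {set A}) : Prop :=
  forall S q, S != set0 -> 0 < q -> q <= n.-1 -> C S q \subset C S q.+1.

Definition irrelevance_accepted (n : nat) (C : {set A} -> nat -> {set A}) : Prop :=
  forall S S' q, S != set0 -> S' != set0 -> 0 < q -> q <= n.-1 ->
    S :\: C S q = S' :\: C S' q ->
    C S q.+1 :&: (S :\: C S q) = C S' q.+1 :&: (S' :\: C S' q).

Definition lexicographic (n : nat) (C : {set A} -> nat -> {set A}) : Prop :=
  exists P : seq (rel A),
    size P = n /\ (forall i, i < size P -> strict_linear (nth (fun _ _ => false) P i)) /\
    forall S q, S != set0 -> 0 < q <= n -> C S q = lexchoice (take q P) S.

Definition walk_open_list (w o : rel A) (q : nat) : seq (rel A) :=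
  nseq (uphalf q) w ++ nseq (q - uphalf q) o.

Definition open_walk_list (w o : rel A) (q : nat) : seq (rel A) :=
  nseq (uphalf q) o ++ nseq (q - uphalf q) w.

(* position i+1 (i.e. index i, 0-based) is w iff i+1 is odd *)
Definition rotating_list (w o : rel A) (q : nat) : seq (rel A) :=
  mkseq (fun i => if odd i then o else w) q.

Definition compromise_blocks (q : nat) : nat * nat * nat :=
  let m := q %/ 4 in
  match q %% 4 with
  | 0 => (m, 2 * m, m)
  | 1 => (m.+1, 2 * m, m)
  | 2 => (m.+1, (2 * m).+1, m)
  | _ => (m.+1, (2 * m).+1, m.+1)
  end.

Definition compromise_list (w o : rel A) (q : nat) : seq (rel A) :=
  let: (a, b, c) := compromise_blocks q in nseq a w ++ nseq b o ++ nseq c w.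

Definition rule_of (L : nat -> seq (rel A)) : {set A} -> nat -> {set A} :=
  fun S q => lexchoice (L q) S.

Definition walk_open (w o : rel A) := rule_of (walk_open_list w o).
Definition open_walk (w o : rel A) := rule_of (open_walk_list w o).
Definition rotating (w o : rel A) := rule_of (rotating_list w o).
Definition compromise (w o : rel A) := rule_of (compromise_list w o).

End ChoiceRules.

(* Main.v *)
Require Import Defs.
From mathcomp Require Import all_boot zify.
Set Implicit Arguments. Unset Strict Implicit. Unset Printing Implicit Defensive.

Section Gen.
Variable A : finType.
Implicit Types (r : rel A) (S T : {set A}) (l : seq (rel A)).

Lemma sl_asym r x y : strict_linear r -> r x y -> r y x -> False.
Proof. move=> [irr [tr _]] h1 h2. by move: (tr _ _ _ h1 h2); rewrite irr. Qed.

Lemma top_eq r S x : strict_linear r -> x \in S ->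
  (forall y, y \in S -> y != x -> r x y) -> top r S = Some x.
Proof.
move=> sl xS hx; rewrite /top; case: pickP => [z /andP[zS /forallP hz]|H].
  case: (eqVneq z x) => [->//|nzx].
  have h1 := hx z zS nzx.
  have := hz x; rewrite xS eq_sym nzx /= => h2.
  by case: (sl_asym sl h1 h2).
have := H x; rewrite xS /=; move/negP; case; apply/forallP => y.
by apply/implyP => yS; apply/implyP => nyx; apply: hx.
Qed.

Lemma top_some r S x : top r S = Some x ->
  x \in S /\ (forall y, y \in S -> y != x -> r x y).
Proof.
rewrite /top; case: pickP => [z /andP[zS /forallP hz] [<-]|//].
split=> // y yS nyz; by have := hz y; rewrite yS nyz.
Qed.

Lemma exists_max r S : strict_linear r -> S != set0 ->
  exists x, x \in S /\ (forall y, y \in S -> y != x -> r x y).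
Proof.
move=> sl; have [n] := ubnP #|S|; elim: n S => // n IH S HS /set0Pn [a aS].
case: (eqVneq (S :\ a) set0) => [E|NE].
  exists a; split=> // y yS nya.
  by move/setP: E => /(_ y); rewrite !inE nya yS.
have [|m [mS hm]] := IH (S :\ a) _ NE.
  by rewrite (cardsD1 a S) aS add1n ltnS in HS.
move: mS; rewrite !inE => /andP[nma mS].
case rma: (r m a).
  exists m; split=> // y yS nym; case: (eqVneq y a) => [->//|nya].
  by apply: hm => //; rewrite !inE nya.
have ram : r a m.
  by case: sl => _ [_ tot]; move: (tot a m); rewrite eq_sym nma rma orbF; apply.
exists a; split=> // y yS nya; case: (eqVneq y m) => [->//|nym].
case: sl => _ [tr _]; apply: tr ram _; apply: hm => //; by rewrite !inE nya.
Qed.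

Lemma top_none r S : strict_linear r -> top r S = None -> S = set0.
Proof.
move=> sl H; apply/eqP; apply/negPn/negP => /(exists_max sl) [x [xS hx]].
by rewrite (top_eq sl xS hx) in H.
Qed.

Lemma top_set0 r : top r set0 = None.
Proof. rewrite /top; case: pickP => // x; by rewrite inE. Qed.

Fixpoint allSL l : Prop := if l is r :: l' then strict_linear r /\ allSL l' else True.

Lemma allSL_cat l1 l2 : allSL (l1 ++ l2) <-> allSL l1 /\ allSL l2.
Proof. elim: l1 => [|r l1 IH] /=; first by tauto. rewrite IH; tauto. Qed.

Lemma allSL_nseq k r : strict_linear r -> allSL (nseq k r).
Proof. by move=> sl; elim: k => //= k ->. Qed.

Lemma allSL_map (T : Type) (f : T -> rel A) s : (forall x, strict_linear (f x)) -> allSL (map f s).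
Proof. by move=> h; elim: s => //= x s ->. Qed.

Lemma allSL_take P q : (forall i, i < size P -> strict_linear (nth (fun _ _ => false) P i)) ->
  allSL (take q P).
Proof.
elim: P q => [|r P IH] [|q] //= h; split; first exact: (h 0).
by apply: IH => i hi; apply: (h i.+1).
Qed.

Lemma lex_sub l S : lexchoice l S \subset S.
Proof.
elim: l S => [|r l IH] S /=; first by rewrite sub0set.
case E: (top r S) => [a|]; last by rewrite sub0set.
have [aS _] := top_some E.
rewrite subUset sub1set aS /=; apply: subset_trans (IH _) _; exact: subD1set.
Qed.

Lemma lex_set0 l : lexchoice l set0 = set0.
Proof. by apply/eqP; rewrite -subset0 lex_sub. Qed.

Lemma lex_card l S : allSL l -> #|lexchoice l S| = minn #|S| (size l).
Proof.
elim: l S => [|r l IH] S /=; first by rewrite cards0 minn0.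
move=> [sl al]; case E: (top r S) => [a|].
  have [aS _] := top_some E.
  rewrite cardsU1 IH // (cardsD1 a S) aS.
  have -> : (a \notin lexchoice l (S :\ a)).
    apply/negP => /(subsetP (lex_sub _ _)); by rewrite !inE eqxx.
  rewrite add1n minnSS //.
by rewrite (top_none sl E) cards0 min0n.
Qed.

Lemma setDU1' (x : A) S T : S :\: (x |: T) = (S :\ x) :\: T.
Proof. by apply/setP => y; rewrite !inE; case: (y \in S); case: (y == x); case: (y \in T). Qed.

Lemma rem_mono l S T : allSL l -> T \subset S ->
  T :\: lexchoice l T \subset S :\: lexchoice l S.
Proof.
elim: l S T => [|r l IH] S T /=; first by rewrite !setD0.
move=> [sl al] TS.
case ET: (top r T) => [t'|]; last by rewrite (top_none sl ET) set0D sub0set.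
case ES: (top r S) => [t|]; last by move: TS; rewrite (top_none sl ES) subset0 => /eqP ->; rewrite set0D sub0set.
rewrite !setDU1'; apply: IH => //.
have [t'T ht'] := top_some ET; have [tS ht] := top_some ES.
apply/subsetP => x; rewrite !inE => /andP[nxt' xT]; rewrite (subsetP TS) // andbT.
apply/eqP => ext; subst x.
case: (sl_asym sl (ht t' (subsetP TS _ t'T) _) (ht' t xT nxt')).
by rewrite eq_sym.
Qed.

Lemma lex_ins x r y S : allSL (x ++ r :: y) ->
  lexchoice (x ++ y) S \subset lexchoice (x ++ r :: y) S.
Proof.
elim: x S => [|r' x IH] S /=.
  move=> [sl al]; case ES: (top r S) => [t|]; last by rewrite (top_none sl ES) lex_set0.
  apply/subsetP => a aC; rewrite !inE; case: (eqVneq a t) => //= nat.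
  apply/negPn/negP => naC.
  have : a \in (S :\ t) :\: lexchoice y (S :\ t).
    by rewrite !inE naC nat (subsetP (lex_sub y S)).
  move/(subsetP (rem_mono al (subD1set S t))); by rewrite !inE aC.
move=> [sl al]; case: (top r' S) => // a.
by apply: setUS; apply: IH.
Qed.

Lemma lex_cat l1 l2 S : allSL l1 ->
  lexchoice (l1 ++ l2) S = lexchoice l1 S :|: lexchoice l2 (S :\: lexchoice l1 S).
Proof.
elim: l1 S => [|r l1 IH] S /=; first by rewrite set0U setD0.
move=> [sl al]; case ES: (top r S) => [a|]; last by rewrite (top_none sl ES) set0D lex_set0 setU0.
by rewrite IH // setDU1' setUA.
Qed.

Definition lexicographicC := lexicographic.

Lemma lexico_iaa n (C : {set A} -> nat -> {set A}) : lexicographic n C -> irrelevance_accepted n C.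
Proof.
move=> [P [sP [hP hC]]] S S' q nS nS' q0 qn E.
have qP : q < size P by rewrite sP; lia.
have hkey : forall X, X != set0 -> C X q.+1 :&: (X :\: C X q) = lexchoice [:: nth (fun _ _ => false) P q] (X :\: C X q).
  move=> X nX; have h1 : 0 < q <= n by lia. have h2 : 0 < q.+1 <= n by lia. rewrite !hC //.
  rewrite (take_nth (fun _ _ => false) qP) -cats1 lex_cat; last exact: allSL_take.
  set Y := lexchoice (take q P) X.
  rewrite setIUl.
  have -> : Y :&: (X :\: Y) = set0.
    by apply/setP => z; rewrite !inE; case: (z \in Y); rewrite ?andbF.
  by rewrite set0U; apply/setIidPl; apply: lex_sub.
by rewrite !hkey // E.
Qed.

End Gen.

Section Rules.
Variable A : finType.
Variables w o : rel A.
Hypothesis slw : strict_linear w.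
Hypothesis slo : strict_linear o.

Record goodL (L : nat -> seq (rel A)) : Prop := GoodL {
  gl_sl : forall q, allSL (L q);
  gl_size : forall q, size (L q) = q;
  gl_ins : forall q, exists i r, L q.+1 = take i (L q) ++ r :: drop i (L q) }.

Lemma goodL_props L n : goodL L ->
  capacity_filling n (rule_of L) /\ gross_substitutes n (rule_of L) /\ monotonicity n (rule_of L).
Proof.
case=> hsl hsz hins; split; [|split].
- by move=> S q _ _; rewrite /rule_of lex_card // hsz.
- move=> S q a b _ _ aS bS nab aC; rewrite /rule_of.
  apply/negPn/negP => naC.
  have : a \in (S :\ b) :\: lexchoice (L q) (S :\ b) by rewrite !inE naC nab aS.
  move/(subsetP (rem_mono (hsl q) (subD1set S b))); by rewrite !inE aC.
- move=> S q _ _ _; rewrite /rule_of.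
  have [i [r E]] := hins q; rewrite E.
  have := hsl q.+1; rewrite E => hs.
  by rewrite -{1}(cat_take_drop i (L q)); apply: lex_ins.
Qed.

Lemma uphalf_cases q : (exists k, q = k.*2 /\ uphalf q = k /\ uphalf q.+1 = k.+1)
  \/ (exists k, q = k.*2.+1 /\ uphalf q = k.+1 /\ uphalf q.+1 = k.+1).
Proof.
have E := odd_double_half q; have U := uphalf_half q.
have U1 : uphalf q.+1 = (q./2).+1 by [].
move: E U U1; rewrite -addnn; case: (odd q) => /= E U U1.
  by right; exists q./2; rewrite -addnn; split; lia.
by left; exists q./2; rewrite -addnn; split; lia.
Qed.

Lemma two_block_good (x y : rel A) :
  strict_linear x -> strict_linear y ->
  goodL (fun q => nseq (uphalf q) x ++ nseq (q - uphalf q) y).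
Proof.
move=> sx sy; split.
- by move=> q; apply/allSL_cat; split; apply: allSL_nseq.
- move=> q; rewrite size_cat !size_nseq.
  have : uphalf q <= q by case: (uphalf_cases q) => [[k [-> [-> _]]]|[k [-> [-> _]]]]; lia.
  lia.
- move=> q; case: (uphalf_cases q) => [[k [E [-> ->]]]|[k [E [-> ->]]]].
  + exists 0, x; rewrite take0 drop0 /=. congr (_ :: nseq _ _ ++ nseq _ _); lia.
  + exists k.+1, y.
    rewrite take_size_cat ?size_nseq // drop_size_cat ?size_nseq //.
    have -> : q.+1 - k.+1 = (q - k.+1).+1 by lia.
    by [].
Qed.

Lemma rot_good : goodL (rotating_list w o).
Proof.
split.
- by move=> q; rewrite /rotating_list /mkseq; apply: allSL_map => i; case: (odd i).
- by move=> q; rewrite size_mkseq.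
- move=> q; exists q, (if odd q then o else w).
  rewrite /rotating_list mkseqS -cats1 take_oversize ?size_mkseq // drop_oversize ?size_mkseq //.
Qed.

Lemma cb0 m : compromise_blocks (m * 4) = (m, 2 * m, m).
Proof. by rewrite /compromise_blocks -[m * 4]addn0 modnMDl divnMDl // addn0. Qed.
Lemma cb1 m : compromise_blocks (m * 4 + 1) = (m.+1, 2 * m, m).
Proof. by rewrite /compromise_blocks modnMDl divnMDl // addn0. Qed.
Lemma cb2 m : compromise_blocks (m * 4 + 2) = (m.+1, (2 * m).+1, m).
Proof. by rewrite /compromise_blocks modnMDl divnMDl // addn0. Qed.
Lemma cb3 m : compromise_blocks (m * 4 + 3) = (m.+1, (2 * m).+1, m.+1).
Proof. by rewrite /compromise_blocks modnMDl divnMDl // addn0. Qed.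

Lemma comp_good : goodL (compromise_list w o).
Proof.
have dec : forall q, exists m k, q = m * 4 + k /\ k < 4.
  move=> q; exists (q %/ 4), (q %% 4); split; [exact: divn_eq| exact: ltn_pmod].
split.
- move=> q; rewrite /compromise_list; case: (compromise_blocks q) => [[a b] c] /=.
  by apply/allSL_cat; split; [|apply/allSL_cat; split]; apply: allSL_nseq.
- move=> q; have [m [k [-> hk]]] := dec q.
  case: k hk => [|[|[|[|k]]]] // _; rewrite ?addn0 ?cb0 ?cb1 ?cb2 ?cb3 /compromise_list ?cb0 ?cb1 ?cb2 ?cb3 !size_cat !size_nseq; lia.
- move=> q; have [m [k [-> hk]]] := dec q.
  case: k hk => [|[|[|[|k]]]] // _; rewrite /compromise_list.
  + rewrite addn0 -[(m * 4).+1]addn1 cb0 cb1.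
    by exists 0, w; rewrite take0 drop0.
  + have -> : (m * 4 + 1).+1 = m * 4 + 2 by lia.
    rewrite cb1 cb2.
    exists m.+1, o; rewrite take_size_cat ?size_nseq //. rewrite drop_size_cat ?size_nseq //.
  + have -> : (m * 4 + 2).+1 = m * 4 + 3 by lia.
    rewrite cb2 cb3.
    exists (m.+1 + (2 * m).+1), w.
    rewrite [in take _ _]catA [in drop _ _]catA take_size_cat ?size_cat ?size_nseq // drop_size_cat ?size_cat ?size_nseq //.
    by rewrite -catA.
  + have -> : (m * 4 + 3).+1 = m.+1 * 4 by lia.
    rewrite cb3 cb0.
    have -> : 2 * m.+1 = (2 * m).+2 by lia.
    exists m.+1, o; rewrite take_size_cat ?size_nseq // drop_size_cat ?size_nseq //.
Qed.

End Rules.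

Definition rkrel n (f : nat -> nat) : rel 'I_n := fun x y => f x < f y.
Arguments rkrel : clear implicits.

Lemma rkrel_sl n (f : nat -> nat) : (forall x y : 'I_n, f x = f y -> x = y) -> strict_linear (rkrel n f).
Proof.
move=> inj; split; [|split].
- by move=> x; rewrite /rkrel ltnn.
- by move=> x y z; rewrite /rkrel; apply: ltn_trans.
- move=> x y nxy; rewrite /rkrel.
  by case: (ltngtP (f x) (f y)) => // /inj E; rewrite E eqxx in nxy.
Qed.

Definition mkset n (s : seq nat) : {set 'I_n} := [set x : 'I_n | val x \in s].
Arguments mkset : clear implicits.
Definition el n k (H : k < n) : 'I_n := Ordinal H.

Ltac enum5 := let y := fresh in let H := fresh in
  case => [[|[|[|[|[|y]]]]] H] //.

Definition w5 := rkrel 5 id.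
Definition o5 := rkrel 5 (nth 0 [:: 0; 1; 4; 2; 3]).

Lemma w5sl : strict_linear w5.
Proof. apply: rkrel_sl => x y; exact: val_inj. Qed.
Lemma o5sl : strict_linear o5.
Proof. apply: rkrel_sl; enum5; enum5; by move=> _; apply: val_inj. Qed.

Ltac side5 := first [ by rewrite !inE | let y := fresh "y" in move=> y; rewrite !inE; move: y; enum5 ].
Ltac tstep sl k :=
  rewrite (top_eq (x := @el 5 k isT) sl) /=; [| side5 | side5].
Ltac setfin5 := let y := fresh "y" in apply/setP => y; rewrite !inE; move: y; enum5.

Lemma woA : lexchoice [:: w5; o5] (mkset 5 [:: 0;1;2;4]) = mkset 5 [:: 0;1].
Proof. rewrite /=. tstep w5sl 0. tstep o5sl 1. setfin5. Qed.

Definition w6 := rkrel 6 id.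
Definition o6 := rkrel 6 (nth 0 [:: 0; 1; 2; 4; 5; 3]).
Definition o5b := rkrel 5 (nth 0 [:: 0; 1; 3; 4; 2]).

Ltac enum6 := let y := fresh in let H := fresh in
  case => [[|[|[|[|[|[|y]]]]]] H] //.
Ltac side6 := first [ by rewrite !inE | let y := fresh "y" in move=> y; rewrite !inE; move: y; enum6 ].
Ltac tstep6 sl k :=
  rewrite (top_eq (x := @el 6 k isT) sl) /=; [| side6 | side6].
Ltac setfin6 := let y := fresh "y" in apply/setP => y; rewrite !inE; move: y; enum6.

Lemma w6sl : strict_linear w6.
Proof. apply: rkrel_sl => x y; exact: val_inj. Qed.
Lemma o6sl : strict_linear o6.
Proof. apply: rkrel_sl; enum6; enum6; by move=> _; apply: val_inj. Qed.
Lemma o5bsl : strict_linear o5b.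
Proof. apply: rkrel_sl; enum5; enum5; by move=> _; apply: val_inj. Qed.

Lemma iaa_fail n (C : {set 'I_n} -> nat -> {set 'I_n}) S S' q x :
  S != set0 -> S' != set0 -> 0 < q -> q <= n.-1 ->
  S :\: C S q = S' :\: C S' q ->
  x \in C S q.+1 :&: (S :\: C S q) -> x \notin C S' q.+1 :&: (S' :\: C S' q) ->
  ~ irrelevance_accepted n C.
Proof.
move=> h1 h2 h3 h4 E hx hx' H.
by move: hx'; rewrite -(H S S' q h1 h2 h3 h4 E) hx.
Qed.

Lemma ne5 s k (H : k < 5) : k \in s -> mkset 5 s != set0.
Proof. move=> ks; apply/set0Pn; exists (Ordinal H); by rewrite inE. Qed.
Lemma ne6 s k (H : k < 6) : k \in s -> mkset 6 s != set0.
Proof. move=> ks; apply/set0Pn; exists (Ordinal H); by rewrite inE. Qed.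

Lemma wo1 : lexchoice [:: w5; o5] (mkset 5 [:: 0;2;3;4]) = mkset 5 [:: 0;3].
Proof. rewrite /=. tstep w5sl 0. tstep o5sl 3. setfin5. Qed.
Lemma wo2 : lexchoice [:: w5; w5; o5] (mkset 5 [:: 0;1;2;4]) = mkset 5 [:: 0;1;4].
Proof. rewrite /=. tstep w5sl 0. tstep w5sl 1. tstep o5sl 4. setfin5. Qed.
Lemma wo3 : lexchoice [:: w5; w5; o5] (mkset 5 [:: 0;2;3;4]) = mkset 5 [:: 0;2;3].
Proof. rewrite /=. tstep w5sl 0. tstep w5sl 2. tstep o5sl 3. setfin5. Qed.

Lemma woL2 : walk_open_list w5 o5 2 = [:: w5; o5]. Proof. by []. Qed.
Lemma woL3 : walk_open_list w5 o5 3 = [:: w5; w5; o5]. Proof. by []. Qed.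

Lemma wo_not_iaa : ~ irrelevance_accepted #|'I_5| (walk_open w5 o5).
Proof.
rewrite card_ord.
apply: (@iaa_fail 5 _ (mkset 5 [:: 0;1;2;4]) (mkset 5 [:: 0;2;3;4]) 2 (@el 5 4 isT)).
- exact: (@ne5 _ 0 isT).
- exact: (@ne5 _ 0 isT).
- by [].
- by [].
- rewrite /walk_open /rule_of woL2 woA wo1. setfin5.
- rewrite /walk_open /rule_of woL2 woL3 woA wo2.
  by rewrite !inE.
- rewrite /walk_open /rule_of woL2 woL3 wo1 wo3.
  by rewrite !inE.
Qed.

Lemma owL2 : open_walk_list w5 o5b 2 = [:: o5b; w5]. Proof. by []. Qed.
Lemma owL3 : open_walk_list w5 o5b 3 = [:: o5b; o5b; w5]. Proof. by []. Qed.
Lemma ow0 : lexchoice [:: o5b; w5] (mkset 5 [:: 0;1;3;4]) = mkset 5 [:: 0;1].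
Proof. rewrite /=. tstep o5bsl 0. tstep w5sl 1. setfin5. Qed.
Lemma ow1 : lexchoice [:: o5b; w5] (mkset 5 [:: 0;2;3;4]) = mkset 5 [:: 0;2].
Proof. rewrite /=. tstep o5bsl 0. tstep w5sl 2. setfin5. Qed.
Lemma ow2 : lexchoice [:: o5b; o5b; w5] (mkset 5 [:: 0;1;3;4]) = mkset 5 [:: 0;1;3].
Proof. rewrite /=. tstep o5bsl 0. tstep o5bsl 1. tstep w5sl 3. setfin5. Qed.
Lemma ow3 : lexchoice [:: o5b; o5b; w5] (mkset 5 [:: 0;2;3;4]) = mkset 5 [:: 0;2;4].
Proof. rewrite /=. tstep o5bsl 0. tstep o5bsl 4. tstep w5sl 2. setfin5. Qed.

Lemma ow_not_iaa : ~ irrelevance_accepted #|'I_5| (open_walk w5 o5b).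
Proof.
rewrite card_ord.
apply: (@iaa_fail 5 _ (mkset 5 [:: 0;1;3;4]) (mkset 5 [:: 0;2;3;4]) 2 (@el 5 3 isT)).
- exact: (@ne5 _ 0 isT).
- exact: (@ne5 _ 0 isT).
- by [].
- by [].
- rewrite /open_walk /rule_of owL2 ow0 ow1. setfin5.
- rewrite /open_walk /rule_of owL2 owL3 ow0 ow2. by rewrite !inE.
- rewrite /open_walk /rule_of owL2 owL3 ow1 ow3. by rewrite !inE.
Qed.

Lemma cL3 : compromise_list w6 o6 3 = [:: w6; o6; w6]. Proof. by []. Qed.
Lemma cL4 : compromise_list w6 o6 4 = [:: w6; o6; o6; w6]. Proof. by []. Qed.
Lemma cp0 : lexchoice [:: w6; o6; w6] (mkset 6 [:: 0;1;2;4;5]) = mkset 6 [:: 0;1;2].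
Proof. rewrite /=. tstep6 w6sl 0. tstep6 o6sl 1. tstep6 w6sl 2. setfin6. Qed.
Lemma cp1 : lexchoice [:: w6; o6; w6] (mkset 6 [:: 0;1;3;4;5]) = mkset 6 [:: 0;1;3].
Proof. rewrite /=. tstep6 w6sl 0. tstep6 o6sl 1. tstep6 w6sl 3. setfin6. Qed.
Lemma cp2 : lexchoice [:: w6; o6; o6; w6] (mkset 6 [:: 0;1;2;4;5]) = mkset 6 [:: 0;1;2;4].
Proof. rewrite /=. tstep6 w6sl 0. tstep6 o6sl 1. tstep6 o6sl 2. tstep6 w6sl 4. setfin6. Qed.
Lemma cp3 : lexchoice [:: w6; o6; o6; w6] (mkset 6 [:: 0;1;3;4;5]) = mkset 6 [:: 0;1;3;5].
Proof. rewrite /=. tstep6 w6sl 0. tstep6 o6sl 1. tstep6 o6sl 5. tstep6 w6sl 3. setfin6. Qed.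

Lemma cp_not_iaa : ~ irrelevance_accepted #|'I_6| (compromise w6 o6).
Proof.
rewrite card_ord.
apply: (@iaa_fail 6 _ (mkset 6 [:: 0;1;2;4;5]) (mkset 6 [:: 0;1;3;4;5]) 3 (@el 6 4 isT)).
- exact: (@ne6 _ 0 isT).
- exact: (@ne6 _ 0 isT).
- by [].
- by [].
- rewrite /compromise /rule_of cL3 cp0 cp1. setfin6.
- rewrite /compromise /rule_of cL3 cL4 cp0 cp2. by rewrite !inE.
- rewrite /compromise /rule_of cL3 cL4 cp1 cp3. by rewrite !inE.
Qed.

Lemma rot_lex (A : finType) (w o : rel A) : strict_linear w -> strict_linear o ->
  lexicographic #|A| (rotating w o).
Proof.
move=> sw so; exists (rotating_list w o #|A|); split; first by rewrite size_mkseq.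
split.
  move=> i; rewrite size_mkseq => hi; rewrite nth_mkseq //; by case: (odd i).
move=> S q _ /andP[_ hq]; rewrite /rotating /rule_of /rotating_list /mkseq -map_take take_iota.
by rewrite (minn_idPl hq).
Qed.

Theorem proposition6 :
  (forall (A : finType) (w o : rel A),
     0 < #|A| -> strict_linear w -> strict_linear o ->
     (forall C, (C = walk_open w o \/ C = open_walk w o \/ C = rotating w o \/
                 C = compromise w o) ->
        capacity_filling #|A| C /\ gross_substitutes #|A| C /\ monotonicity #|A| C) /\
     irrelevance_accepted #|A| (rotating w o) /\ lexicographic #|A| (rotating w o))
  /\
  (exists (A : finType) (w o : rel A),
     [/\ 0 < #|A|, strict_linear w, strict_linear o,
         ~ irrelevance_accepted #|A| (walk_open w o) & ~ lexicographic #|A| (walk_open w o)])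
  /\
  (exists (A : finType) (w o : rel A),
     [/\ 0 < #|A|, strict_linear w, strict_linear o,
         ~ irrelevance_accepted #|A| (open_walk w o) & ~ lexicographic #|A| (open_walk w o)])
  /\
  (exists (A : finType) (w o : rel A),
     [/\ 0 < #|A|, strict_linear w, strict_linear o,
         ~ irrelevance_accepted #|A| (compromise w o) & ~ lexicographic #|A| (compromise w o)]).
Proof.
split; last split; last split.
- move=> A w o _ sw so; split; last first.
    have hl := rot_lex sw so; split => //; exact: lexico_iaa.
  move=> C HC.
  case: HC => [->|[->|[->|->]]]; apply: goodL_props.
  + exact: two_block_good.
  + exact: two_block_good.
  + exact: rot_good.
  + exact: comp_good.
- exists ('I_5 : finType), w5, o5; split.
  + by rewrite card_ord.
  + exact: w5sl.
  + exact: o5sl.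
  + exact: wo_not_iaa.
  + by move/lexico_iaa; apply: wo_not_iaa.
- exists ('I_5 : finType), w5, o5b; split.
  + by rewrite card_ord.
  + exact: w5sl.
  + exact: o5bsl.
  + exact: ow_not_iaa.
  + by move/lexico_iaa; apply: ow_not_iaa.
- exists ('I_6 : finType), w6, o6; split.
  + by rewrite card_ord.
  + exact: w6sl.
  + exact: o6sl.
  + exact: cp_not_iaa.
  + by move/lexico_iaa; apply: cp_not_iaa.
Qed.
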